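(* Let $\lambda\ge 1$, $n$, $0<R\le\sqrt n$, $m=\lceil\sqrt{5n}/R\rceil$, and partition $[0,\sqrt n]^2$ into $m\times m$ congruent square cells. Let $n$ nodes be placed at points of the square such that every cell contains at least $R^2/\lambda$ and at most $\lambda R^2$ nodes, and let $G$ be the graph on the nodes joining two nodes iff their Euclidean distance is at most $R$. Then, with $\alpha=1/(2\lambda)$, $G$ is an $(h,\alpha R^2/h)$-expander for every $1\le h\le\alpha R^2$.
   Context: For a graph $G$ on $[n]$ and $I\subseteq[n]$, $N(I)$ is the set of nodes outside $I$ adjacent to some node of $I$. $G$ is an $(h,k)$-expander if every $I$ with $|I|\le h$ satisfies $|N(I)|\ge k|I|$. Each node belongs to exactly one cell. *)

(* Defs.v *)
From mathcomp Require Import all_boot.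
From Stdlib Require Import Reals.
Set Implicit Arguments. Unset Strict Implicit. Unset Printing Implicit Defensive.

Definition nbhd (T : finType) (adj : rel T) (I : {set T}) : {set T} :=
  [set y | (y \notin I) && [exists x in I, adj x y]].

Definition expander (T : finType) (adj : rel T) (h k : R) : Prop :=
  forall I : {set T}, (INR #|I| <= h)%R -> (k * INR #|I| <= INR #|nbhd adj I|)%R.

Definition dist2 (x1 y1 x2 y2 : R) : R :=
  sqrt ((x1 - x2) ^ 2 + (y1 - y2) ^ 2).

Definition geo_adj (n : nat) (px py : 'I_n -> R) (r : R) : rel 'I_n :=
  fun u v => (u != v) && (if Rle_dec (dist2 (px u) (py u) (px v) (py v)) r then true else false).

(* Main.v *)
Require Import Defs.
From mathcomp Require Import all_boot.
From Stdlib Require Import Reals Lra Psatz.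

Lemma sq_bound (a s x y : R) :
  (a * s <= x <= (a + 1) * s)%R -> (a * s <= y <= (a + 1) * s)%R ->
  ((x - y) ^ 2 <= s ^ 2)%R.
Proof. intros. nra. Qed.

Theorem mainTheorem5 (lam Rad : R) (n m : nat)
  (px py : 'I_n -> R) (c : 'I_n -> 'I_m * 'I_m) :
  (1 <= lam)%R ->
  (0 < Rad)%R -> (Rad <= sqrt (INR n))%R ->
  (INR m - 1 < sqrt (5 * INR n) / Rad <= INR m)%R ->
  (forall v, 0 <= px v <= sqrt (INR n) /\ 0 <= py v <= sqrt (INR n))%R ->
  (forall v,
     INR (nat_of_ord (c v).1) * (sqrt (INR n) / INR m) <= px v
       <= INR (nat_of_ord (c v).1 + 1) * (sqrt (INR n) / INR m) /\
     INR (nat_of_ord (c v).2) * (sqrt (INR n) / INR m) <= py v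
       <= INR (nat_of_ord (c v).2 + 1) * (sqrt (INR n) / INR m))%R ->
  (forall ij : 'I_m * 'I_m,
     Rad ^ 2 / lam <= INR #|[set v | c v == ij]| <= lam * Rad ^ 2)%R ->
  forall h : R, (1 <= h <= (1 / (2 * lam)) * Rad ^ 2)%R ->
    expander (geo_adj px py Rad) h ((1 / (2 * lam)) * Rad ^ 2 / h)%R.
Proof.
move=> Hlam HR HRn [Hm1 Hm2] Hbox Hcell Hcnt h [Hh1 Hh2] I HI.
have [I0|[v vI]] := set_0Vmem I.
  rewrite I0 cards0 /=. rewrite Rmult_0_r. apply: pos_INR.
set C := [set u | c u == c v].
have Hmpos : (0 < INR m)%R.
  apply: lt_0_INR. apply/ltP. case: (c v).1 => i Hi. exact: leq_ltn_trans Hi.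
set S := (sqrt (INR n) / INR m)%R.
have Hn : (0 <= INR n)%R by apply: pos_INR.
have HS5 : (5 * S ^ 2 <= Rad ^ 2)%R.
  have H1 : (sqrt (5 * INR n) <= INR m * Rad)%R.
    apply (Rmult_le_compat_r Rad) in Hm2; last lra.
    by rewrite /Rdiv Rmult_assoc Rinv_l ?Rmult_1_r in Hm2; lra.
  have H2 : (5 * INR n <= (INR m * Rad) ^ 2)%R.
    rewrite -(sqrt_sqrt (5 * INR n)); last lra.
    have := sqrt_pos (5 * INR n). nra.
  have HS : (S ^ 2 = INR n / INR m ^ 2)%R.
    rewrite /S /Rdiv Rpow_mult_distr pow2_sqrt //.
    by rewrite pow_inv.
  rewrite HS. apply (Rmult_le_reg_r (INR m ^ 2)); first nra.
  rewrite Rmult_assoc /Rdiv Rmult_assoc Rinv_l; nra.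
have Hsub : C :\: I \subset nbhd (geo_adj px py Rad) I.
  apply/subsetP => u; rewrite !inE => /andP [uI /eqP cu].
  rewrite uI /=. apply/existsP; exists v; rewrite vI /=.
  rewrite /geo_adj. have -> : (v != u).
    apply/eqP => E; move: uI; by rewrite -E vI.
  rewrite /=. case: Rle_dec => // Hne; exfalso; apply: Hne.
  have [[Hx1 Hx2] [Hy1 Hy2]] := Hcell u.
  have [[Hx1' Hx2'] [Hy1' Hy2']] := Hcell v.
  rewrite cu !plus_INR /= in Hx1 Hx2 Hy1 Hy2.
  rewrite !plus_INR /= in Hx1' Hx2' Hy1' Hy2'.
  have Ex := @sq_bound _ _ _ _ (conj Hx1 Hx2) (conj Hx1' Hx2').
  have Ey := @sq_bound _ _ _ _ (conj Hy1 Hy2) (conj Hy1' Hy2').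
  rewrite /dist2 -(sqrt_pow2 Rad); last lra.
  apply: sqrt_le_1_alt. rewrite -/S in Ex Ey. nra.
have Hcard : (#|C| <= #|C :\: I| + #|I|)%N.
  rewrite -(cardsID I C) addnC leq_add2l. apply: subset_leq_card; exact: subsetIr.
have Hc := Hcnt (c v). rewrite -/C in Hc.
have H1 : (INR #|C| <= INR #|nbhd (geo_adj px py Rad) I| + INR #|I|)%R.
  rewrite -plus_INR. apply: le_INR. apply/leP.
  apply: leq_trans Hcard _. rewrite leq_add2r. exact: subset_leq_card.
have Hl : (Rad ^ 2 / lam = 2 * (1 / (2 * lam) * Rad ^ 2))%R.
  field. lra.
set A := (1 / (2 * lam) * Rad ^ 2)%R in Hh2 Hl *.
have HIpos := pos_INR #|I|.
have : (A / h * INR #|I| <= A)%R.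
  rewrite /Rdiv Rmult_assoc. rewrite -{2}(Rmult_1_r A).
  have HA : (0 <= A)%R by lra.
  apply: Rmult_le_compat_l => //.
  apply (Rmult_le_reg_l h); first lra.
  rewrite -Rmult_assoc Rinv_r; lra.
lra.
Qed.
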